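(* Let $\tau$ be a finite topology on a finite set $X$. Then there exists a finite topology $\tau'$ on $X$ such that $G_2(\tau)\cong G_2(\tau')$ and the height of $\tau'$ is at most $2$.
   Context: A finite topology on $X$ is a family of subsets (open sets) containing $\emptyset,X$ and closed under unions and intersections. $m_\tau(x)$ is the intersection of all open sets containing $x$. The height of $\tau$ is the largest $h$ such that there are distinct $v_1,\dots,v_h\in X$ with $m_\tau(v_1)\subseteq m_\tau(v_2)\subseteq\cdots\subseteq m_\tau(v_h)$. $G_2(\tau)$ is the simple graph on $X$ in which distinct $x,y$ are adjacent iff there do not exist disjoint open sets $U_x\ni x$, $U_y\ni y$. *)

(* Defs.v *)
From mathcomp Require Import all_boot.
Set Implicit Arguments. Unset Strict Implicit. Unset Printing Implicit Defensive.

Definition is_topology (T : finType) (tau : {set {set T}}) : Prop :=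
  [/\ set0 \in tau, setT \in tau,
      (forall U V, U \in tau -> V \in tau -> U :|: V \in tau) &
      (forall U V, U \in tau -> V \in tau -> U :&: V \in tau)].

Definition minopen (T : finType) (tau : {set {set T}}) (x : T) : {set T} :=
  \bigcap_(U in tau | x \in U) U.

Definition has_chain (T : finType) (tau : {set {set T}}) (h : nat) : bool :=
  [exists s : h.-tuple T,
     uniq s && sorted (fun a b => minopen tau a \subset minopen tau b) s].

Definition height (T : finType) (tau : {set {set T}}) : nat :=
  \max_(h < #|T|.+1 | has_chain tau h) h.

Definition G2 (T : finType) (tau : {set {set T}}) (x y : T) : bool :=
  (x != y) &&
  ~~ [exists U in tau, exists V in tau,
        [&& x \in U, y \in V & [disjoint U & V]]].

Definition graph_iso (T : finType) (e1 e2 : T -> T -> bool) : Prop :=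
  exists f : T -> T, bijective f /\ forall x y, e1 x y = e2 (f x) (f y).

(* Main.v *)
Require Import Defs.
From mathcomp Require Import all_boot.
Set Implicit Arguments. Unset Strict Implicit.

Section Gen.
Variables (T : finType) (tau : {set {set T}}).
Hypothesis Htop : is_topology tau.
Local Notation m := (minopen tau).

Lemma m_open x : m x \in tau.
Proof.
case: Htop => H0 HT HU HI; rewrite /minopen.
apply: (big_ind (fun U : {set T} => U \in tau)) => //; by move=> U /andP[].
Qed.

Lemma m_self x : x \in m x.
Proof. by apply/bigcapP => U /andP[]. Qed.

Lemma m_min U x : U \in tau -> x \in U -> m x \subset U.
Proof. move=> HU Hx; apply/subsetP => y /bigcapP; apply; by rewrite HU Hx. Qed.

Lemma m_mono a b : a \in m b -> m a \subset m b.
Proof. exact: m_min (m_open b). Qed.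

Lemma G2E x y : G2 tau x y = (x != y) && [exists z, (z \in m x) && (z \in m y)].
Proof.
rewrite /G2; congr (_ && _).
case: (boolP [exists z, (z \in m x) && (z \in m y)]) => [/existsP [z /andP[zx zy]] | /existsPn Hn].
- apply/negP => /existsP [U /andP [HU /existsP [V /andP [HV /and3P [xU yV dUV]]]]].
  have zU := subsetP (m_min HU xU) z zx.
  have zV := subsetP (m_min HV yV) z zy.
  by rewrite (disjointFr dUV zU) in zV.
- apply/negbF; apply/existsP; exists (m x); rewrite m_open /=.
  apply/existsP; exists (m y); rewrite m_open !m_self /=.
  rewrite disjoints_subset; apply/subsetP => z zx; rewrite inE; apply/negP => zy; by move: (Hn z); rewrite zx zy.
Qed.

End Gen.

Section Constr.
Variables (T : finType) (tau : {set {set T}}).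
Hypothesis Htop : is_topology tau.
Local Notation m := (minopen tau).
Let mS := m_self tau.
Let mM := @m_mono _ _ Htop.
Let mO := m_open Htop.

Definition minl x := [forall w, (w \in m x) ==> (x \in m w)].
Definition rep x := minl x && [forall w, (w \in m x) ==> (enum_rank x <= enum_rank w)%N].

Lemma exists_minl y : exists2 w, w \in m y & minl w.
Proof.
case: (arg_minnP (fun w => #|m w|) (mS y)) => w wy Hw.
exists w => //; apply/forallP => v; apply/implyP => vw.
have sub := mM vw.
have vy : v \in m y by apply: (subsetP (mM wy)).
have e : m v == m w by rewrite eqEcard sub Hw.
by rewrite (eqP e) mS.
Qed.

Lemma minl_eq w v : minl w -> v \in m w -> m v = m w.
Proof.
move=> /forallP/(_ v)/implyP H vw.
by apply/eqP; rewrite eqEsubset mM //= mM //; exact: H.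
Qed.

Lemma exists_rep w : minl w -> exists2 r, rep r & m r = m w.
Proof.
move=> Hw.
case: (arg_minnP (fun r => nat_of_ord (enum_rank r)) (mS w)) => r rw Hr.
have e := minl_eq Hw rw.
exists r => //; apply/andP; split.
- apply/forallP => v; apply/implyP => vr; rewrite e in vr.
  by rewrite (minl_eq Hw vr).
- apply/forallP => v; apply/implyP => vr; apply: Hr; by rewrite -e.
Qed.

Definition le' x y := (x == y) || (rep x && (x \in m y)).

Definition tau' : {set {set T}} :=
  [set U : {set T} | [forall y, (y \in U) ==> [forall x, le' x y ==> (x \in U)]]].

Lemma tau'P (U : {set T}) : reflect (forall x y, le' x y -> y \in U -> x \in U) (U \in tau').
Proof.
rewrite inE; apply: (iffP forallP) => H.
- move=> x y lxy yU; move: (H y); rewrite yU /= => /forallP/(_ x); by rewrite lxy.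
- move=> y; apply/implyP => yU; apply/forallP => x; apply/implyP => lxy; exact: H lxy yU.
Qed.

Lemma tau'_top : is_topology tau'.
Proof.
split.
- by apply/tau'P => x y _; rewrite !inE.
- by apply/tau'P => x y _; rewrite !inE.
- move=> U V /tau'P HU /tau'P HV; apply/tau'P => x y lxy; rewrite !inE => /orP[yU|yV].
  + by rewrite (HU x y lxy yU).
  + by rewrite (HV x y lxy yV) orbT.
- move=> U V /tau'P HU /tau'P HV; apply/tau'P => x y lxy; rewrite !inE => /andP[yU yV].
  by rewrite (HU x y lxy yU) (HV x y lxy yV).
Qed.

Lemma le'_refl x : le' x x.
Proof. by rewrite /le' eqxx. Qed.

Lemma le'_trans x y z : le' x y -> le' y z -> le' x z.
Proof.
rewrite /le' => /orP[/eqP->//|/andP[rx xy]] /orP[/eqP<-|/andP[ry yz]].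
- by rewrite rx xy orbT.
- by rewrite rx (subsetP (mM yz) x xy) orbT.
Qed.

Lemma m'E y : minopen tau' y = [set x | le' x y].
Proof.
apply/eqP; rewrite eqEsubset; apply/andP; split.
- apply: m_min.
  + apply/tau'P => x z lxz; rewrite !inE => lzy; exact: le'_trans lxz lzy.
  + by rewrite inE le'_refl.
- apply/subsetP => x; rewrite inE => lxy.
  move: (m_open tau'_top y) => /tau'P H; apply: H lxy _; exact: m_self.
Qed.

End Constr.

Theorem lemma3p5 (T : finType) (tau : {set {set T}}) :
  is_topology tau ->
  exists tau' : {set {set T}},
    [/\ is_topology tau', graph_iso (G2 tau) (G2 tau') & height tau' <= 2].
Proof.
move=> Htop; exists (tau' tau); split.
- exact: tau'_top.
- exists id; split; first by exists id.
  move=> x y; rewrite (G2E Htop) (G2E (tau'_top tau)) !(m'E Htop); congr (_ && _).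
  apply/existsP/existsP.
  + move=> [z /andP[zx zy]].
    have [w wz mw] := exists_minl Htop z.
    have [r rr er] := exists_rep Htop mw.
    have rz : r \in minopen tau z by apply: (subsetP (m_mono Htop wz)); rewrite -er m_self.
    exists r; rewrite !inE /le' rr (subsetP (m_mono Htop zx) r rz) (subsetP (m_mono Htop zy) r rz).
    by rewrite !orbT.
  + move=> [z]; rewrite !inE => /andP[zx zy]; exists z.
    have H w : le' tau z w -> z \in minopen tau w.
      by case/orP => [/eqP->|/andP[_ ->]]; rewrite ?m_self.
    by rewrite !H.
- rewrite /height; apply/bigmax_leqP => h Hh.
  case: (leqP h 2) => // h3; exfalso.
  move: Hh => /existsP [s /andP [us ss]].
  case: s us ss => sq Hsz /= us ss.
  move/eqP: Hsz => Hsz.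
  case: sq Hsz us ss => [|a [|b [|c r]]] Hsz us ss; try (by rewrite -Hsz in h3).
  move: us => /= /andP[nab /andP[nbc _]].
  have ab : a != b by apply: contraNneq nab => ->; rewrite mem_head.
  have bc : b != c by apply: contraNneq nbc => ->; rewrite mem_head.
  move: ss => /= /andP[sab /andP[sbc _]].
  rewrite !(m'E Htop) in sab sbc.
  have := subsetP sab a; rewrite !inE le'_refl => /(_ isT).
  rewrite /le' (negbTE ab) /= => /andP[ra amb].
  have := subsetP sbc b; rewrite !inE le'_refl => /(_ isT).
  rewrite /le' (negbTE bc) /= => /andP[rb bmc].
  case/andP: ra => _ /forallP Ha.
  case/andP: rb => /forallP Hmb /forallP Hb.
  have bma : b \in minopen tau a by move: (Hmb a); rewrite amb.
  move: (Ha b) (Hb a); rewrite amb bma /= => le1 le2.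
  have : enum_rank a = enum_rank b by apply/val_inj/eqP; rewrite eqn_leq le1 le2.
  move/enum_rank_inj => eab; by rewrite eab eqxx in ab.
Qed.
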